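(* Let $\mathbb{K}$ be a distribution of $y\in(0,\infty)$, let $0<\epsilon\le 0.01$, and suppose $\theta^*\in\mathbb{R}^+$ attains $\min_{\theta\in\mathbb{R}^+}\mathrm{CR}(\theta,\mathbb{K})$; write $f^*_{\mathbb{K}}=\mathrm{CR}(\theta^*,\mathbb{K})$. Let $f^\epsilon_{\mathbb{K}}=\inf_{\theta\in[\epsilon,1/\epsilon]}\mathrm{CR}(\theta,\mathbb{K})$. Then $$f^\epsilon_{\mathbb{K}}\le(1+\epsilon)f^*_{\mathbb{K}}.$$
   Context: For threshold $\theta\ge0$ and season length $y>0$: $g(\theta,y)=\frac{1+\theta}{\min\{1,y\}}$ if $y\ge\theta$ and $g(\theta,y)=\frac{y}{\min\{1,y\}}$ otherwise (the competitive ratio of the ski-rental strategy that rents, at cost $1$ per unit time, until time $\theta$ and then buys at cost $1$). $\mathrm{CR}(\theta,\mathbb{K})=\mathbb{E}_{y\sim\mathbb{K}}[g(\theta,y)]$. *)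

(* Defs.v *)
From HB Require Import structures.
From mathcomp Require Import all_boot all_order all_algebra.
From mathcomp Require Import all_classical all_reals all_analysis.
Set Implicit Arguments. Unset Strict Implicit. Unset Printing Implicit Defensive.
Import Order.TTheory GRing.Theory Num.Theory.
Local Open Scope ring_scope.
Local Open Scope classical_set_scope.

(* competitive ratio of the threshold-theta ski-rental strategy on season length y *)
Definition g {R : realType} (theta y : R) : R :=
  if theta <= y then (1 + theta) / Num.min 1 y else y / Num.min 1 y.

Definition CR {R : realType} (theta : R) (P : probability R R) : \bar R :=
  (\int[P]_y (g theta y)%:E)%E.

(* Main.v *)
Require Import Defs.
From HB Require Import structures.
From mathcomp Require Import all_boot all_order all_algebra.
From mathcomp Require Import all_classical all_reals all_analysis.
From mathcomp Require Import ring lra measurable_realfun.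
Import Order.TTheory GRing.Theory Num.Theory.
Local Open Scope ring_scope.
Local Open Scope classical_set_scope.

Section aux.
Variable R : realType.

Lemma measurable_inv : measurable_fun [set: R] (fun x : R => x^-1).
Proof.
have -> : [set: R] = [set 0] `|` ~` [set 0] by rewrite setUv.
apply/measurable_funU => //.
  by apply: measurableC.
split; first exact: measurable_fun_set1.
apply: measurable_realfun.open_continuous_measurable_fun.
  by apply: closed_openC; exact: (accessible_closed_set1 (hausdorff_accessible (@Rhausdorff R))).
by move=> x; rewrite inE => /eqP x0; apply: inv_continuous.
Qed.

Definition Nm (theta y : R) : R := if theta <= y then 1 + theta else y.

Lemma gE theta y : g theta y = Nm theta y * (Num.min 1 y)^-1.
Proof. by rewrite /g /Nm; case: ifP. Qed.

Lemma measurable_g theta : measurable_fun [set: R] (fun y => g theta y).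
Proof.
have -> : (fun y => g theta y) = (fun y => Nm theta y * (Num.min 1 y)^-1).
  by apply/funext => y; rewrite gE.
apply: measurable_realfun.measurable_funM.
  apply: measurable_fun_ifT.
  - by apply: measurable_realfun.measurable_fun_ler => //; exact: measurable_cst.
  - exact: measurable_cst.
  - exact: measurable_id.
apply: (measurableT_comp measurable_inv).
by apply: measurable_realfun.measurable_minr => //; exact: measurable_cst.
Qed.

Definition th0 (eps ts : R) := if ts < eps then eps else if eps^-1 < ts then eps^-1 else ts.

Lemma Nm_ge0 (t y : R) : 0 <= t -> 0 < y -> 0 <= Nm t y.
Proof. by rewrite /Nm => t0 y0; case: ifP => _; lra. Qed.

Lemma Nm_le eps ts y : 0 < eps -> eps <= 100^-1 -> 0 <= ts -> 0 < y ->
  Nm (th0 eps ts) y <= (1 + eps) * Nm ts y.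
Proof.
move=> e0 e1 ts0 y0.
have ie : eps * eps^-1 = 1 by rewrite mulfV // gt_eqF.
have ie0 : 0 < eps^-1 by rewrite invr_gt0.
have e1' : eps < 1 by apply: (le_lt_trans e1); rewrite invf_lt1 //; lra.
rewrite /th0 /Nm.
have [h1|h1] := ltP ts eps.
  case: (lerP eps y) => h2; case: (lerP ts y) => h3; nra.
have [h2|h2] := ltP eps^-1 ts.
  case: (lerP eps^-1 y) => h3; case: (lerP ts y) => h4; nra.
case: (lerP ts y) => h3; nra.
Qed.

Lemma g_le eps ts y : 0 < eps -> eps <= 100^-1 -> 0 <= ts -> 0 < y ->
  g (th0 eps ts) y <= (1 + eps) * g ts y.
Proof.
move=> e0 e1 ts0 y0; rewrite !gE mulrA.
have m0 : 0 < (Num.min 1 y)^-1 by rewrite invr_gt0 lt_min; lra.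
by rewrite ler_pM2r //; apply: Nm_le.
Qed.

Lemma g_ge0 (t y : R) : 0 <= t -> 0 < y -> 0 <= g t y.
Proof.
move=> t0 y0; rewrite gE; apply: mulr_ge0; first exact: Nm_ge0.
by rewrite invr_ge0 le_min; lra.
Qed.

End aux.
Arguments th0 {R}.

Lemma CR_D (R : realType) (P : probability R R) (t : R) :
  P `]0%R, +oo[ = 1%E ->
  CR t P = (\int[P]_(y in `]0%R, +oo[) (g t y)%:E)%E.
Proof.
move=> PD.
have mD : measurable (`]0%R, +oo[ : set R) by [].
have mg : measurable_fun [set: R] (fun y : R => ((g t y)%:E : \bar R)).
  by apply/measurable_EFinP; exact: measurable_g.
rewrite /CR [RHS](integral_mkcond (`]0%R, +oo[ : set R)).
apply: ae_eq_integral => //.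
  by apply/(measurable_restrictT _ _).1 => //; exact: measurable_funS mg.
exists (~` `]0%R, +oo[); split.
- exact: measurableC.
- apply: eq_trans (probability_setC P mD) _.
  have e : forall u : \bar R, u = 1%E -> (1 - u = 0)%E by move=> u ->; rewrite subee.
  by apply: e; exact: PD.
- move=> x /= h Dx; apply: h => _; rewrite patchT // inE.
exact: Dx.
Qed.

Theorem mainTheorem4 (R : realType) (P : probability R R) (eps theta_star : R) :
  P `]0%R, +oo[ = 1%E ->
  0 < eps -> eps <= 100^-1 ->
  0 <= theta_star ->
  (forall theta : R, 0 <= theta -> (CR theta_star P <= CR theta P)%E) ->
  (ereal_inf [set CR theta P | theta in [set t : R | (eps <= t)%R /\ (t <= eps^-1)%R]] <=
     (1 + eps)%:E * CR theta_star P)%E.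
Proof.
move=> PD e0 e1 ts0 _.
have ie : eps * eps^-1 = 1 by rewrite mulfV // gt_eqF.
have ie0 : 0 < eps^-1 by rewrite invr_gt0.
have e1' : eps < 1 by apply: (le_lt_trans e1); rewrite invf_lt1 //; lra.
have eie : eps <= eps^-1 by nra.
have H2 : (CR (th0 eps theta_star) P <= (1 + eps)%:E * CR theta_star P)%E; last first.
  apply: le_trans H2.
  apply: ereal_inf_lbound; exists (th0 eps theta_star) => //.
  rewrite /th0; have [h1|h1] := ltP theta_star eps; first by split.
  by have [h2|h2] := ltP eps^-1 theta_star; split => //; apply/ltW.
have mD : measurable (`]0%R, +oo[ : set R) by [].
have mg (t : R) : measurable_fun (`]0%R, +oo[ : set R) (fun y : R => ((g t y)%:E : \bar R)).
  apply: measurable_funS (_ : measurable [set: R]) _ _ => //.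
  by apply/measurable_EFinP; exact: measurable_g.
rewrite !CR_D // -ge0_integralZl_EFin //; last 2 first.
- by move=> y /= Dy; rewrite lee_fin; apply: g_ge0 => //; move: Dy; rewrite in_itv /= andbT.
- lra.
apply: ge0_le_integral => //.
- move=> y /= Dy; rewrite lee_fin; apply: g_ge0; last by move: Dy; rewrite in_itv /= andbT.
  by rewrite /th0; case: ifP => _; [lra|case: ifP => _; lra].
- by apply: measurable_funeM; exact: mg.
- move=> y /= Dy; rewrite -EFinM lee_fin; apply: g_le => //.
  by move: Dy; rewrite in_itv /= andbT.
Qed.
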